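(* Let $k\in\{1,\dots,n\}$. Let $S_0=\emptyset$ and, for $t=1,\dots,k$, let $S_t=S_{t-1}\cup\{u_t\}$ where $u_t\in\arg\max_{u\in V\setminus S_{t-1}}\big(r(S_{t-1}\cup\{u\})-r(S_{t-1})\big)$ (ties broken arbitrarily). Then $$r(S_k)\;\ge\;\Big(1-\frac1e\Big)\max_{S\subseteq V,\;|S|=k} r(S).$$
   Context: Let $G=(V,E)$ be a finite tree with $|V|=n$, rooted at a node $s$ (the infection source). For a node $i$: $d_i$ is its depth (number of edges on the path from $s$ to $i$); $A_i$ is the set of ancestors of $i$ (strict, including its parent); $N_i$ is the set of descendants of $i$ (strict, not including $i$); $n_i=|N_i|$. Each edge $e$ carries an independent random variable $X_e\sim\mathrm{Exp}(\lambda)$ with $\lambda>0$, and $Z_i=\sum_{e \text{ on the path from } s \text{ to } i}X_e$ is the infection time of $i$ (so $Z_s=0$; $Z_i$ is a sum of $d_i$ i.i.d. $\mathrm{Exp}(\lambda)$ variables). The immunization time $\tau\ge 0$ is a single random variable, common to all vaccinated nodes and independent of $(X_e)_{e\in E}$. For $S\subseteq V$ (the vaccinated set), a node $i\in S$ becomes immune iff $Z_i>\tau$, and an immune node saves all its descendants. The expected total reward is defined as $r(S)=\mathbb{E}\big[\,\big|\bigcup_{i\in S:\,Z_i>\tau}N_i\big|\,\big]$, the expected number of nodes that are descendants of at least one immune vaccinated node. *)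

(* Defs.v *)
From HB Require Import structures.
From mathcomp Require Import all_boot all_order all_algebra.
From mathcomp Require Import all_classical all_reals all_analysis.
Set Implicit Arguments. Unset Strict Implicit. Unset Printing Implicit Defensive.
Import Order.TTheory GRing.Theory Num.Theory.
Local Open Scope classical_set_scope.
Local Open Scope ring_scope.

(* A finite tree on the vertex type [V] rooted at [s] is encoded by its parent
   map: [parent s = s], and iterating [parent] from any vertex reaches [s]
   (after at most #|V| steps).  The edges are the pairs {parent v, v}, v <> s,
   so edges are indexed by the non-root vertices. *)
Definition rooted_tree (V : finType) (s : V) (parent : V -> V) : Prop :=
  parent s = s /\ forall v : V, iter #|V| parent v = s.

(* [anc parent s i j] : i is a strict ancestor of j (i in A_j), i.e. i lies on
   the path from s to j, i <> j.  The path j, parent j, parent^2 j, ... is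
   followed until it first reaches s. *)
Definition anc (V : finType) (s : V) (parent : V -> V) (i j : V) : bool :=
  [exists m : 'I_#|V|.+1,
     [&& (0 < m)%N, iter m parent j == i & iter m.-1 parent j != s]].

Definition desc (V : finType) (s : V) (parent : V -> V) (i : V) : {set V} :=
  [set j | anc s parent i j].

(* edges on the path from s to i, indexed by their lower endpoint *)
Definition path_edges (V : finType) (s : V) (parent : V -> V) (i : V) : {set V} :=
  [set j | ((j == i) || anc s parent j i) && (j != s)].

Section model.
Context {d : measure_display} {Omega : measurableType d} {R : realType}.
Variable P : probability Omega R.
Variables (V : finType) (s : V) (parent : V -> V).
Variable X : V -> Omega -> R.   (* X v = weight of the edge (parent v, v) *)
Variable tau : Omega -> R.      (* immunization time *)

Definition Z (i : V) (w : Omega) : R := \sum_(j in path_edges s parent i) X j w.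

Definition saved (S : {set V}) (w : Omega) : nat :=
  #|\bigcup_(i in S | tau w < Z i w) desc s parent i|.

Definition reward (S : {set V}) : \bar R :=
  ('E_P[fun w => (saved S w)%:R])%E.
End model.

Definition mutually_independent {d : measure_display} {Omega : measurableType d}
  {R : realType} (P : probability Omega R) (I : finType) (D : {set I})
  (Y : I -> Omega -> R) : Prop :=
  forall B : I -> set R, (forall i, measurable (B i)) ->
    P (\bigcap_(i in [set i | i \in D]) (Y i @^-1` B i)) =
    (\prod_(i in D) P (Y i @^-1` B i))%E.

(* S_t = {u_0, ..., u_{t-1}} (0-indexed: u_0 is the paper's u_1) *)
Definition greedy_set (V : finType) (u : nat -> V) (t : nat) : {set V} :=
  [set x | [exists i : 'I_t, u i == x]].

(* Main.v *)
Set Warnings "-notation-overridden,-ambiguous-paths,-notation-incompatible-prefix".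
Require Import Defs.
From HB Require Import structures.
From mathcomp Require Import all_boot all_order all_algebra.
From mathcomp Require Import all_classical all_reals all_analysis.
From mathcomp Require Import measurable_realfun ring lra.
Import Order.TTheory GRing.Theory Num.Theory.
Set Implicit Arguments. Unset Strict Implicit. Unset Printing Implicit Defensive.
Local Open Scope ring_scope.
Definition cov (V : finType) (F : V -> {set V}) (S B : {set V}) : nat :=
  #|\bigcup_(i in S | i \in B) F i|.

Lemma card_bigcup_le (V I : finType) (A : {set I}) (F : I -> {set V}) :
  (#|\bigcup_(v in A) F v| <= \sum_(v in A) #|F v|)%N.
Proof.
apply: (big_ind2 (fun (X : {set V}) (n : nat) => #|X| <= n)%N).
- by rewrite cards0.
- move=> x1 x2 y1 y2 h1 h2; apply: leq_trans (leq_card_setU _ _) _.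
  exact: leq_add.
- by [].
Qed.

Lemma cov_mono (V : finType) (F : V -> {set V}) (A S B : {set V}) :
  A \subset S -> (cov F A B <= cov F S B)%N.
Proof.
move=> AS; apply: subset_leq_card; apply/bigcupsP => i /andP[iA iB].
by apply: (bigcup_max i) => //; rewrite (fintype.subsetP AS) // iB.
Qed.

Lemma cov_sub (V : finType) (F : V -> {set V}) (A S B : {set V}) :
  (cov F S B <= cov F A B + \sum_(v in S :\: A) (cov F (v |: A) B - cov F A B))%N.
Proof.
set U := fun X : {set V} => \bigcup_(i in X | i \in B) F i.
have sub : U S \subset U A :|: \bigcup_(v in S :\: A) (U (v |: A) :\: U A).
  apply/fintype.subsetP => j /bigcupP[i /andP[iS iB] jF].
  rewrite inE; case: (boolP (j \in U A)) => //= jA.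
  have iA : i \notin A.
    apply: contra jA => iA; apply/bigcupP; exists i => //; by rewrite iA.
  apply/bigcupP; exists i; first by rewrite inE iA.
  rewrite inE jA /=; apply/bigcupP; exists i => //; by rewrite !inE eqxx.
apply: leq_trans (subset_leq_card sub) _.
apply: leq_trans (leq_card_setU _ _) _; rewrite leq_add2l /cov.
apply: leq_trans (card_bigcup_le _ _) _.
apply: leq_sum => v _.
have sUA : U A \subset U (v |: A).
  apply/bigcupsP => i /andP[iA iB].
  by apply: (bigcup_max i) => //; rewrite !inE iA orbT iB.
by rewrite cardsD (finset.setIidPr sUA).
Qed.
Definition rho (R : realType) (V : finType) (F : V -> {set V}) (p : {set V} -> R)
  (A : {set V}) : R := \sum_(B : {set V}) (cov F A B)%:R * p B.

Lemma rho_ge0 (R : realType) (V : finType) F (p : {set V} -> R) (A : {set V}) :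
  (forall B, 0 <= p B) -> 0 <= rho F p A.
Proof. by move=> p0; apply: sumr_ge0 => B _; apply: mulr_ge0. Qed.

Lemma rho_mono (R : realType) (V : finType) F (p : {set V} -> R) (A S : {set V}) :
  (forall B, 0 <= p B) -> A \subset S -> rho F p A <= rho F p S.
Proof.
move=> p0 AS; apply: ler_sum => B _; apply: ler_wpM2r => //.
by rewrite ler_nat cov_mono.
Qed.

Lemma rho_set0 (R : realType) (V : finType) F (p : {set V} -> R) :
  rho F p finset.set0 = 0.
Proof.
apply: big1 => B _; rewrite /cov big_pred0 ?cards0 ?mul0r // => i.
by rewrite inE.
Qed.

Lemma rho_sub (R : realType) (V : finType) F (p : {set V} -> R) (A S : {set V}) :
  (forall B, 0 <= p B) ->
  rho F p S <= rho F p A + \sum_(v in S :\: A) (rho F p (v |: A) - rho F p A).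
Proof.
move=> p0.
have -> : \sum_(v in S :\: A) (rho F p (v |: A) - rho F p A) =
  \sum_(B : {set V}) (\sum_(v in S :\: A) ((cov F (v |: A) B)%:R - (cov F A B)%:R)) * p B.
  under [RHS]eq_bigr do rewrite mulr_suml.
  rewrite exchange_big /=; apply: eq_bigr => v _.
  by rewrite /rho -sumrB; apply: eq_bigr => B _; rewrite mulrBl.
rewrite /rho -big_split /=; apply: ler_sum => B _.
rewrite -mulrDl; apply: ler_wpM2r => //.
have H := cov_sub F A S B.
have -> : \sum_(v in S :\: A) ((cov F (v |: A) B)%:R - (cov F A B)%:R) =
  (\sum_(v in S :\: A) (cov F (v |: A) B - cov F A B)%N)%:R :> R.
  rewrite natr_sum; apply: eq_bigr => v _; rewrite natrB //.
  by apply: cov_mono; apply: finset.subsetUr.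
by rewrite -natrD ler_nat.
Qed.

Lemma greedy_setS (V : finType) (u : nat -> V) t :
  greedy_set u t.+1 = u t |: greedy_set u t.
Proof.
apply/finset.setP => x; rewrite !inE; apply/existsP/idP.
- case=> i /eqP <-; have [it|] := ltnP i t.
    by apply/orP; right; apply/existsP; exists (Ordinal it).
  move=> ti; have -> : nat_of_ord i = t by apply/eqP; rewrite eqn_leq ti -ltnS ltn_ord.
  by rewrite eqxx.
- case/orP => [/eqP ->|/existsP [i /eqP <-]].
    by exists ord_max.
  by exists (widen_ord (leqnSn t) i).
Qed.

Lemma greedy_set0 (V : finType) (u : nat -> V) : greedy_set u 0 = finset.set0.
Proof. by apply/finset.setP => x; rewrite !inE; apply/existsP => -[[]]. Qed.

Lemma greedy_bound (R : realType) (V : finType) F (p : {set V} -> R)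
  (u : nat -> V) (k : nat) (S : {set V}) :
  (forall B, 0 <= p B) -> (1 <= k)%N -> #|S| = k ->
  (forall t, (t < k)%N ->
     u t \notin greedy_set u t /\
     forall v, v \notin greedy_set u t ->
       rho F p (v |: greedy_set u t) - rho F p (greedy_set u t) <=
       rho F p (u t |: greedy_set u t) - rho F p (greedy_set u t)) ->
  (1 - expR (-1)) * rho F p S <= rho F p (greedy_set u k).
Proof.
move=> p0 k1 Sk gr.
set O := rho F p S; set g := fun t => rho F p (greedy_set u t).
set c : R := 1 - k%:R^-1.
have kpos : (0 : R) < k%:R by rewrite ltr0n.
have c0 : 0 <= c by rewrite subr_ge0 invf_le1 // ler1n.
have O0 : 0 <= O by exact: rho_ge0.
have step : forall t, (t < k)%N -> O - g t.+1 <= c * (O - g t).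
  move=> t tk; have [_ gt] := gr t tk.
  set A := greedy_set u t.
  set D := rho F p (u t |: A) - rho F p A.
  have D0 : 0 <= D by rewrite subr_ge0; apply: rho_mono => //; exact: finset.subsetUr.
  have H1 : O <= g t + k%:R * D.
    have := @rho_sub _ _ F p A S p0.
    move=> HH; apply: (le_trans HH).
    rewrite lerD2l.
    apply: le_trans (_ : \sum_(v in S :\: A) D <= _).
      apply: ler_sum => v; rewrite inE => /andP[vA _]; exact: gt.
    rewrite sumr_const -[D *+ _]mulr_natl; apply: ler_wpM2r => //.
    rewrite ler_nat -Sk; apply: subset_leq_card; exact: finset.subsetDl.
  have -> : g t.+1 = g t + D by rewrite /g greedy_setS /D addrC subrK.
  have H2 : (O - g t) / k%:R <= D.
    by rewrite ler_pdivrMr // mulrC lerBlDl.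
  rewrite /c mulrBl mul1r mulrC -[_ * _^-1]/((O - g t) / k%:R).
  lra.
have ind : forall t, (t <= k)%N -> O - g t <= c ^+ t * O.
  elim=> [|t IH] tk.
    by rewrite /g greedy_set0 rho_set0 subr0 expr0 mul1r.
  apply: le_trans (step t tk) _.
  rewrite exprS -mulrA; apply: ler_wpM2l => //; apply: IH; exact: ltnW.
have ck : c ^+ k <= expR (-1).
  have ce : c <= expR (- k%:R^-1) by apply: expR_ge1Dx.
  apply: le_trans (lerXn2r k _ _ ce) _; rewrite ?nnegrE ?expR_ge0 //.
  rewrite -expRM_natl mulrN mulfV ?gt_eqF //.
have H := ind k (leqnn k).
have H2 : c ^+ k * O <= expR (-1) * O by apply: ler_wpM2r.
rewrite /g in H; rewrite mulrBl mul1r.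
move: H H2; move: (c ^+ k * O) (expR (-1) * O) (rho F p (greedy_set u k)) => a b e.
lra.
Qed.
Lemma expect_setfun d (Omega : measurableType d) (R : realType)
  (P : probability Omega R) (V : finType) (a : V -> Omega -> bool) :
  (forall i, measurable_fun setT (a i)) ->
  exists p : {set V} -> R, (forall B, 0 <= p B) /\
    forall h : {set V} -> R,
      ('E_P[fun w => h [set i | a i w]] = (\sum_(B : {set V}) h B * p B)%:E)%E.
Proof.
move=> ma.
pose ind (B : {set V}) (w : Omega) : R := \prod_(i : V)
  (if i \in B then (if a i w then 1 else 0) else (if a i w then 0 else 1)).
have indE : forall B w, ind B w = ([set i | a i w] == B)%:R.
  move=> B w; case: eqP => [<-|neq].
    by apply: big1 => i _; rewrite inE; case: (a i w).
  case: (pickP (fun i => a i w != (i \in B))) => [i Hi|H0].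
    rewrite /ind (bigD1 i) //=; move: Hi.
    by case: (a i w); case: (i \in B) => //= _; rewrite mul0r.
  exfalso; apply: neq; apply/finset.setP => i; rewrite inE.
  by have := H0 i => /= /negbFE /eqP.
have mind : forall B, measurable_fun setT (ind B).
  move=> B; apply: measurable_prod => i _.
  by case: (i \in B); apply: measurable_fun_ifT => //; exact: measurable_cst.
have Lind : forall B, ind B \in Lfun P 1.
  move=> B; apply/Lfun1_integrable.
  apply: (@le_integrable _ _ _ P _ measurableT _ (EFin \o cst (1:R))).
  - exact/measurable_EFinP.
  - move=> w _ /=; rewrite indE lee_fin.
    by case: (_ == _); rewrite ?normr1 ?normr0.
  - exact: finite_measure_integrable_cst.
exists (fun B => fine 'E_P[ind B]); split.
  move=> B; apply: fine_ge0; apply: expectation_ge0 => w; rewrite indE.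
  by case: (_ == _).
move=> h.
have -> : (fun w => h [set i | a i w]) = \sum_(B : {set V}) (h B \o* ind B).
  apply/funext => w; rewrite fct_sumE (bigD1 [set i | a i w]) //=.
  rewrite indE eqxx mul1r big1 ?addr0 // => B hB.
  by rewrite /= indE eq_sym (negbTE hB) mul0r.
rewrite (_ : \sum_(B : {set V}) (h B \o* ind B) =
   \sum_(Xi <- map (fun B => h B \o* ind B) (index_enum {set V})) Xi);
  last by rewrite big_map.
rewrite expectation_sum; last first.
  by move=> Xi /mapP [B _ ->]; apply: Lfun_scale.
rewrite big_map -sumEFin; apply: eq_bigr => B _.
by rewrite expectationZl // EFinM fineK ?expectation_fin_num.
Qed.
Local Open Scope classical_set_scope.

Theorem mainTheorem5
  (R : realType) (d : measure_display) (Omega : measurableType d)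
  (P : probability Omega R)
  (V : finType) (s : V) (parent : V -> V)
  (lam : R) (X : V -> {RV P >-> R}) (tau : {RV P >-> R})
  (k : nat) (u : nat -> V) :
  rooted_tree s parent ->
  0 < lam ->
  (forall v, v != s -> forall A : set R, measurable A ->
     distribution P (X v) A = exponential_prob lam A) ->
  (forall w, 0 <= tau w) ->
  mutually_independent P [set o : option V | o != Some s]
    (fun o => if o is Some v then (X v : Omega -> R) else (tau : Omega -> R)) ->
  (1 <= k <= #|V|)%N ->
  (forall t, (t < k)%N ->
     u t \notin greedy_set u t /\
     forall v, v \notin greedy_set u t ->
       (reward P s parent (fun v => X v) tau (v |: greedy_set u t)
          - reward P s parent (fun v => X v) tau (greedy_set u t) <=
        reward P s parent (fun v => X v) tau (u t |: greedy_set u t)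
          - reward P s parent (fun v => X v) tau (greedy_set u t))%E) ->
  forall S : {set V}, #|S| = k ->
    (((1 - expR (-1)) : R)%:E * reward P s parent (fun v => X v) tau S <=
     reward P s parent (fun v => X v) tau (greedy_set u k))%E.
Proof.
move=> _ _ _ _ _ /andP[k1 _] gr S Sk.
pose a (i : V) (w : Omega) := tau w < Z s parent (fun v => X v) i w.
have ma : forall i, measurable_fun setT (a i).
  move=> i; apply: measurable_fun_ltr => //.
  rewrite /Z; under eq_fun do rewrite big_mkcond /=.
  apply: measurable_sum => j.
  by case: (j \in _) => //; exact: measurable_cst.
have [p [p0 hE]] := expect_setfun P ma.
have rw : forall S, reward P s parent (fun v => X v) tau S =
    (rho (desc s parent) p S)%:E.
  move=> A; rewrite /reward -hE; congr ('E_P[_])%E; apply/funext => w.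
  congr (_%:R); rewrite /saved /cov; apply: eq_card => j.
  apply: (congr1 (fun Y : {set V} => j \in Y)).
  by apply: eq_bigl => i /=; rewrite inE.
rewrite !rw -EFinM lee_fin; apply: greedy_bound => //.
move=> t tk; have [h1 h2] := gr t tk; split => // v hv.
by have := h2 v hv; rewrite !rw -!EFinB lee_fin.
Qed.
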